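(* The subalgebra $\mathcal{B}^{\mp}\subset\mathrm{Y}^{\mp}(2)$ generated by the center $Z\mathrm{Y}^{\mp}(2)$ and all coefficients of the series $\sigma_1(u,F_{11})$ coincides with the subalgebra generated by $Z\mathrm{Y}^{\mp}(2)$ and the elements $s_{11}^{(2m+1)}$, $m\in\mathbb{Z}_{\ge0}$.
   Context: $\mathrm{Y}(2)$ is the algebra generated by $t^{(r)}_{ij}$, $i,j\in\{-1,1\}$, $r\ge1$, with relations $[t^{(r+1)}_{ij},t^{(s)}_{kl}]-[t^{(r)}_{ij},t^{(s+1)}_{kl}]=t^{(r)}_{kj}t^{(s)}_{il}-t^{(s)}_{kj}t^{(r)}_{il}$, $t^{(0)}_{ij}=\delta_{ij}$; $t_{ij}(u)=\sum_{r\ge0}t^{(r)}_{ij}u^{-r}$. In the symplectic case (sign $-$) $\theta_{ij}=\mathrm{sgn}(i)\mathrm{sgn}(j)$, in the orthogonal case (sign $+$) $\theta_{ij}=1$. Put $s_{ij}(u)=\sum_{a\in\{\pm1\}}\theta_{aj}t_{ia}(u)t_{-j,-a}(-u)=\delta_{ij}+\sum_{M\ge1}s^{(M)}_{ij}u^{-M}$; $\mathrm{Y}^{\mp}(2)$ is the subalgebra of $\mathrm{Y}(2)$ generated by all $s^{(M)}_{ij}$, and $Z\mathrm{Y}^{\mp}(2)$ its center. Let $W=\mathbb{C}^2$ with basis $e_{-1},e_1$, $E_{ij}$ the matrix units, transposition $E_{ij}^t=\theta_{ij}E_{-j,-i}$, $S(u)=\sum_{i,j}s_{ij}(u)\otimes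 E_{ij}$, $P=\sum_{i,j}E_{ij}\otimes E_{ji}$, $A_2=\frac12(1-P)$ on $W^{\otimes2}$, $F_{11}=E_{11}-E_{-1,-1}$. Then $\sigma_1(u,F_{11})=\mathrm{tr}\big[A_2\, S_1(u)\,\big(1-\tfrac{1}{3-2u}\sum_{i,j}E^t_{ij}\otimes E_{ji}\big)\,(F_{11})_2\big]$, where $S_1(u)$ acts on the first and $(F_{11})_2$ on the second tensor factor, the trace is over $W^{\otimes 2}$, and $\sigma_1$ is expanded as a series in $u^{-1}$ with coefficients in $\mathrm{Y}^{\mp}(2)$ (this $\mathcal{B}^{\mp}$ is the Bethe subalgebra for $C=F_{11}$). *)

(* Defs.v *)
From HB Require Import structures.
From mathcomp Require Import all_boot all_order all_algebra.
From mathcomp Require Import reals complex.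
Set Implicit Arguments. Unset Strict Implicit. Unset Printing Implicit Defensive.
Import Order.TTheory GRing.Theory Num.Theory.
Local Open Scope ring_scope.

(* Index set {-1, 1} of the basis e_{-1}, e_1 of W = C^2:
   [false] stands for -1 and [true] stands for 1. *)
Definition idx := bool.
Definition ineg (i : idx) : idx := ~~ i.

Section Yangian.
Variable K : fieldType.

Definition sgn (i : idx) : K := if i then 1 else -1.

(* theta_{ij}: symplectic case (symp = true, sign -) sgn(i)sgn(j);
   orthogonal case (symp = false, sign +) 1. *)
Definition theta (symp : bool) (i j : idx) : K :=
  if symp then sgn i * sgn j else 1.

Variable A : algType K.

Definition is_subalg (P : A -> Prop) : Prop :=
  [/\ P 1, (forall x y, P x -> P y -> P (x + y)),
      (forall (c : K) x, P x -> P (c *: x)) &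
      (forall x y, P x -> P y -> P (x * y))].

Definition gen_alg (G : A -> Prop) (x : A) : Prop :=
  forall P : A -> Prop, is_subalg P -> (forall y, G y -> P y) -> P x.

(* Given the generators t r i j for r >= 1 (the value at r = 0 is ignored),
   tfull r i j is t^{(r)}_{ij} with the convention t^{(0)}_{ij} = delta_{ij}. *)
Definition tfull (t : nat -> idx -> idx -> A) (r : nat) (i j : idx) : A :=
  if r is 0 then (i == j)%:R else t r i j.

Definition yangian_rel (t : nat -> idx -> idx -> A) : Prop :=
  forall (r s : nat) (i j k l : idx),
    let T := tfull t in
    (T r.+1 i j * T s k l - T s k l * T r.+1 i j)
      - (T r i j * T s.+1 k l - T s.+1 k l * T r i j)
    = T r k j * T s i l - T s k j * T r i l.

End Yangian.

Definition alg_morph (K : fieldType) (A B : algType K) (f : A -> B) : Prop :=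
  [/\ forall (c : K) (x y : A), f (c *: x + y) = c *: f x + f y,
      forall x y : A, f (x * y) = f x * f y &
      f 1 = 1].

(* (A, t) is (isomorphic to) the Yangian Y(2) over K: the t^{(r)}_{ij} (r >= 1)
   satisfy the defining relations, generate A, and A has the universal property
   of the algebra presented by these generators and relations. *)
Definition is_Yangian2 (K : fieldType) (A : algType K)
    (t : nat -> idx -> idx -> A) : Prop :=
  [/\ yangian_rel t,
      (forall x : A, gen_alg (fun y => exists r i j, (0 < r)%N /\ y = t r i j) x) &
      (forall (B : algType K) (tau : nat -> idx -> idx -> B), yangian_rel tau ->
         exists f : A -> B, alg_morph f /\
           (forall r i j, (0 < r)%N -> f (t r i j) = tau r i j))].

Section Twisted.
Variables (K : fieldType) (A : algType K) (symp : bool).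
Variable t : nat -> idx -> idx -> A.
Local Notation T := (tfull t).
Local Notation th := (@theta K symp).

(* s^{(M)}_{ij}: coefficient of u^{-M} in
   s_{ij}(u) = sum_a theta_{aj} t_{ia}(u) t_{-j,-a}(-u). *)
Definition scoef (M : nat) (i j : idx) : A :=
  \sum_(a : idx) th a j *:
     \sum_(r < M.+1) ((-1) ^+ (M - r)) *: (T r i a * T (M - r) (ineg j) (ineg a)).

Definition twY (x : A) : Prop :=
  gen_alg (fun y => exists M i j, (0 < M)%N /\ y = scoef M i j) x.

Definition center_twY (z : A) : Prop :=
  twY z /\ forall y, twY y -> z * y = y * z.

(* Operators on W (x) W; indices of W (x) W are pairs (first, second factor).
   An operator X has matrix entries X x y (row x, column y). *)
Definition Pop (x y : idx * idx) : K := ((x.1 == y.2) && (x.2 == y.1))%:R.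
Definition A2op (x y : idx * idx) : K := ((x == y)%:R - Pop x y) / 2.
(* sum_{i,j} E^t_{ij} (x) E_{ji} with E^t_{ij} = theta_{ij} E_{-j,-i} *)
Definition Qop (x y : idx * idx) : K :=
  if (x.1 == ineg x.2) && (y.1 == ineg y.2) then th y.2 x.2 else 0.
(* (F_{11})_2, F_{11} = E_{11} - E_{-1,-1} *)
Definition F2op (x y : idx * idx) : K := if x == y then sgn K y.2 else 0.
(* coefficient of u^{-k} of S_1(u) = sum_{ij} s_{ij}(u) (x) E_{ij} (x) 1 *)
Definition S1op (k : nat) (x y : idx * idx) : A :=
  if x.2 == y.2 then scoef k x.1 y.1 else 0.
(* coefficients (of u^{-k}) of the expansion of 1/(3-2u) in u^{-1}:
   1/(3-2u) = - sum_{k>=0} (3/2)^k / 2 * u^{-k-1}. *)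
Definition inv3m2u (k : nat) : K :=
  if k is k'.+1 then - ((3%:R / 2%:R) ^+ k' / 2%:R) else 0.
(* coefficient of u^{-k} of 1 - 1/(3-2u) sum_{ij} E^t_{ij} (x) E_{ji} *)
Definition Midop (k : nat) (x y : idx * idx) : K :=
  ((x == y) && (k == 0)%N)%:R - inv3m2u k * Qop x y.

(* coefficient of u^{-n} of
   sigma_1(u, F_11) = tr[A_2 S_1(u) (1 - 1/(3-2u) sum E^t_{ij} (x) E_{ji}) (F_11)_2]. *)
Definition sigma1 (n : nat) : A :=
  \sum_(x : idx * idx) \sum_(y : idx * idx) \sum_(z : idx * idx) \sum_(w : idx * idx)
    \sum_(k < n.+1) (A2op x y * Midop (n - k) z w * F2op w x) *: S1op k y z.

End Twisted.

(* Main.v *)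
Require Import Defs.
From HB Require Import structures.
From mathcomp Require Import all_boot all_order all_algebra.
From mathcomp Require Import reals complex.
From mathcomp Require Import ring.
Set Implicit Arguments. Unset Strict Implicit. Unset Printing Implicit Defensive.
Import GRing.Theory Num.Theory.
Local Open Scope ring_scope.

Lemma gen_alg_subalg (K : fieldType) (A : algType K) (G : A -> Prop) :
  is_subalg (gen_alg G).
Proof.
split.
- by move=> P [P1 _ _ _].
- by move=> x y Hx Hy P HP HG; case: (HP) => _ HD _ _; apply: HD; [apply: Hx|apply: Hy].
- by move=> c x Hx P HP HG; case: (HP) => _ _ HZ _; apply: HZ; apply: Hx.
- by move=> x y Hx Hy P HP HG; case: (HP) => _ _ _ HM; apply: HM; [apply: Hx|apply: Hy].
Qed.

Lemma gen_alg_in (K : fieldType) (A : algType K) (G : A -> Prop) y :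
  G y -> gen_alg G y.
Proof. by move=> Gy P _ HG; apply: HG. Qed.

Lemma gen_alg_mono (K : fieldType) (A : algType K) (G G' : A -> Prop) x :
  (forall y, G y -> gen_alg G' y) -> gen_alg G x -> gen_alg G' x.
Proof. by move=> H Hx; apply: Hx => //; apply: gen_alg_subalg. Qed.

Lemma gen_alg0 (K : fieldType) (A : algType K) (G : A -> Prop) : gen_alg G 0.
Proof.
have := (gen_alg_subalg G); case=> H1 _ HZ _.
by rewrite -(scale0r 1); apply: HZ.
Qed.

Lemma gen_algD (K : fieldType) (A : algType K) (G : A -> Prop) x y :
  gen_alg G x -> gen_alg G y -> gen_alg G (x + y).
Proof. by have [_ HD _ _] := gen_alg_subalg G; apply: HD. Qed.

Lemma gen_algZ (K : fieldType) (A : algType K) (G : A -> Prop) c x :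
  gen_alg G x -> gen_alg G (c *: x).
Proof. by have [_ _ HZ _] := gen_alg_subalg G; apply: HZ. Qed.

Lemma gen_alg_sum (K : fieldType) (A : algType K) (G : A -> Prop) n (F : 'I_n -> A) :
  (forall i, gen_alg G (F i)) -> gen_alg G (\sum_(i < n) F i).
Proof.
move=> H; apply: (big_ind (gen_alg G)) => //; [exact: gen_alg0| exact: gen_algD].
Qed.


Lemma ex5 (V : nmodType) (I : finType) n (F : I -> I -> I -> I -> 'I_n -> V) :
  \sum_x \sum_y \sum_z \sum_w \sum_k F x y z w k =
  \sum_k \sum_y \sum_z \sum_x \sum_w F x y z w k.
Proof.
under eq_bigr => x _ do under eq_bigr => y _ do under eq_bigr => z _ do rewrite exchange_big.
under eq_bigr => x _ do under eq_bigr => y _ do rewrite exchange_big.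
under eq_bigr => x _ do rewrite exchange_big.
rewrite exchange_big.
under eq_bigr => k _ do rewrite exchange_big.
by under eq_bigr => k _ do under eq_bigr => y _ do rewrite exchange_big.
Qed.

Definition cc (K : fieldType) (symp : bool) (m : nat) (y z : idx * idx) : K :=
  \sum_(x : idx * idx) \sum_(w : idx * idx) A2op K x y * Midop K symp m z w * F2op K w x.

Lemma sigma1E (K : fieldType) (A : algType K) symp (t : nat -> idx -> idx -> A) n :
  sigma1 symp t n = \sum_(k < n.+1) \sum_y \sum_z cc K symp (n - k) y z *: S1op symp t k y z.
Proof.
rewrite /sigma1 ex5; apply: eq_bigr => k _; apply: eq_bigr => y _; apply: eq_bigr => z _.
rewrite /cc scaler_suml; apply: eq_bigr => x _; by rewrite scaler_suml.
Qed.


Lemma sum4 (V : nmodType) (F : idx * idx -> V) :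
  \sum_p F p = F (true,true) + F (true,false) + F (false,true) + F (false,false).
Proof.
rewrite (eq_bigr (fun p => F (p.1, p.2))); last by case.
rewrite -(pair_big xpredT xpredT (fun a b => F (a, b))) /=.
by rewrite !big_bool /= !addrA.
Qed.

Definition gg (K : fieldType) symp m : K :=
  cc K symp m (true,true) (true,true) + cc K symp m (true,false) (true,false).

Lemma cc_vals (K : fieldType) symp m : (2%:R : K) != 0 ->
  [/\ cc K symp m (false,true) (false,true) + cc K symp m (false,false) (false,false) = - gg K symp m,
      cc K symp m (true,true) (false,true) + cc K symp m (true,false) (false,false) = 0,
      cc K symp m (false,true) (true,true) + cc K symp m (false,false) (true,false) = 0 &
      gg K symp 0 = - 2%:R^-1].
Proof.
move=> h2.
rewrite /gg /cc !sum4 /A2op /Pop /Midop /Qop /F2op /theta /sgn /inv3m2u /=.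
case: symp; split => //=; try field => //.
Qed.


Lemma sumP (V : nmodType) (F : idx * idx -> V) :
  \sum_p F p = \sum_(i : idx) \sum_(j : idx) F (i, j).
Proof.
rewrite (eq_bigr (fun p => F (p.1, p.2))); last by case.
by rewrite -(pair_big xpredT xpredT (fun a b => F (a, b))).
Qed.

Lemma collect (K : fieldType) (V : lmodType K) (c : idx*idx -> idx*idx -> K) (f : idx -> idx -> V) :
  \sum_y \sum_z c y z *: (if y.2 == z.2 then f y.1 z.1 else 0) =
  \sum_(i : idx) \sum_(j : idx) (\sum_(b : idx) c (i,b) (j,b)) *: f i j.
Proof.
rewrite sumP; apply: eq_bigr => i _.
under eq_bigr => b _ do rewrite sumP.
rewrite exchange_big /=; apply: eq_bigr => j _.
rewrite scaler_suml; apply: eq_bigr => b _.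
rewrite big_bool /=; case: b => /=; by rewrite scaler0 ?addr0 ?add0r.
Qed.

Lemma sig_k (K : fieldType) (A : algType K) symp (t : nat -> idx -> idx -> A) m k :
  (2%:R : K) != 0 ->
  \sum_y \sum_z cc K symp m y z *: S1op symp t k y z =
  gg K symp m *: (scoef symp t k true true - scoef symp t k false false).
Proof.
move=> h2; have [e1 e2 e3 _] := cc_vals symp m h2.
rewrite /S1op collect !big_bool /= /gg.
by rewrite e1 e2 e3 !scale0r addr0 add0r scalerBr scaleNr.
Qed.


Lemma sum_rev (V : nmodType) N (F : nat -> V) :
  \sum_(r < N.+1) F r = \sum_(r < N.+1) F (N - r)%N.
Proof.
rewrite -(big_mkord xpredT F) big_nat_rev big_mkord.
by apply: eq_bigr => r _; rewrite add0n subSS.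
Qed.

Lemma sign_sub (K : fieldType) N r : (r <= N)%N ->
  (-1 : K) ^+ N * (-1) ^+ (N - r) = (-1) ^+ r.
Proof.
move=> hr; rewrite -{1}(subnKC hr) exprD -mulrA -exprMn mulrNN mulr1 expr1n mulr1.
by [].
Qed.

Definition Pf (K : fieldType) (A : algType K) (t : nat -> idx -> idx -> A)
  (i j k l : idx) (N : nat) : A :=
  \sum_(r < N.+1) (-1) ^+ (N - r) *: (tfull t r i j * tfull t (N - r) k l).

Lemma Pf_sign (K : fieldType) (A : algType K) (t : nat -> idx -> idx -> A) i j k l N :
  (-1) ^+ N *: Pf t i j k l N = \sum_(r < N.+1) (-1) ^+ r *: (tfull t r i j * tfull t (N - r) k l).
Proof.
rewrite /Pf scaler_sumr; apply: eq_bigr => r _.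
by rewrite scalerA sign_sub // -ltnS.
Qed.

Lemma Pf_swap (K : fieldType) (A : algType K) (t : nat -> idx -> idx -> A) i j k l N :
  (-1) ^+ N *: Pf t k l i j N = \sum_(r < N.+1) (-1) ^+ (N - r) *: (tfull t (N - r) k l * tfull t r i j).
Proof.
rewrite Pf_sign (sum_rev N (fun r => (-1) ^+ (N - r) *: (tfull t (N - r) k l * tfull t r i j))) /=.
by apply: eq_bigr => r _; rewrite subKn // -ltnS.
Qed.


Definition Cf (K : fieldType) (A : algType K) (t : nat -> idx -> idx -> A)
  (i j k l : idx) (r s : nat) : A :=
  tfull t r i j * tfull t s k l - tfull t s k l * tfull t r i j.

Definition Sf (K : fieldType) (A : algType K) (t : nat -> idx -> idx -> A)
  (i j k l : idx) (N : nat) : A :=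
  \sum_(r < N.+2) (-1) ^+ (N.+1 - r) *: Cf t i j k l r (N.+1 - r).

Lemma Sf_eq (K : fieldType) (A : algType K) (t : nat -> idx -> idx -> A) i j k l N :
  Pf t i j k l N.+1 - (-1) ^+ N.+1 *: Pf t k l i j N.+1 = Sf t i j k l N.
Proof.
rewrite Pf_swap /Pf /Sf -sumrB; apply: eq_bigr => r _.
by rewrite /Cf scalerBr.
Qed.

Lemma Cf0l (K : fieldType) (A : algType K) (t : nat -> idx -> idx -> A) i j k l s :
  Cf t i j k l 0 s = 0.
Proof. by rewrite /Cf /= mulr_natl mulr_natr subrr. Qed.

Lemma Cf0r (K : fieldType) (A : algType K) (t : nat -> idx -> idx -> A) i j k l r :
  Cf t i j k l r 0 = 0.
Proof. by rewrite /Cf /= mulr_natl mulr_natr subrr. Qed.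

Lemma L1 (K : fieldType) (A : algType K) (t : nat -> idx -> idx -> A) i j k l N :
  yangian_rel t ->
  2%:R *: Sf t i j k l N =
  \sum_(r < N.+1) ((-1) ^+ (N - r) - (-1) ^+ r) *: (tfull t r k j * tfull t (N - r) i l).
Proof.
move=> HY.
have H : \sum_(r < N.+1) (-1) ^+ (N - r) *: (Cf t i j k l r.+1 (N - r) - Cf t i j k l r (N - r).+1)
  = \sum_(r < N.+1) (-1) ^+ (N - r) *: (tfull t r k j * tfull t (N - r) i l - tfull t (N - r) k j * tfull t r i l).
  by apply: eq_bigr => r _; have := HY r (N - r)%N i j k l; rewrite /= /Cf => ->.
have HA : \sum_(r < N.+1) (-1) ^+ (N - r) *: Cf t i j k l r.+1 (N - r) = Sf t i j k l N.
  rewrite /Sf [RHS]big_ord_recl /= Cf0l scaler0 add0r; apply: eq_bigr => r _.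
  by rewrite /bump /= add1n subSS.
have HB : \sum_(r < N.+1) (-1) ^+ (N - r) *: Cf t i j k l r (N - r).+1 = - Sf t i j k l N.
  rewrite /Sf [in RHS]big_ord_recr /= subnn Cf0r scaler0 addr0 -sumrN; apply: eq_bigr => r _.
  have hr : (r <= N)%N by rewrite -ltnS.
  by rewrite subSn // exprS mulN1r scaleNr opprK.
move: H; rewrite (eq_bigr (fun r : 'I_N.+1 => (-1) ^+ (N - r) *: Cf t i j k l r.+1 (N - r) - (-1) ^+ (N - r) *: Cf t i j k l r (N - r).+1)); last by move=> r _; rewrite scalerBr.
rewrite sumrB HA HB opprK scaler_nat mulr2n => ->.
rewrite (eq_bigr (fun r : 'I_N.+1 => (-1) ^+ (N - r) *: (tfull t r k j * tfull t (N - r) i l) - (-1) ^+ (N - r) *: (tfull t (N - r) k j * tfull t r i l))); last by move=> r _; rewrite scalerBr.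
rewrite [RHS](eq_bigr (fun r : 'I_N.+1 => (-1) ^+ (N - r) *: (tfull t r k j * tfull t (N - r) i l) - (-1) ^+ r *: (tfull t r k j * tfull t (N - r) i l))); last by move=> r _; rewrite scalerBl.
rewrite !sumrB; congr (_ - _).
rewrite (sum_rev N (fun r => (-1) ^+ (N - r) *: (tfull t (N - r) k j * tfull t r i l))) /=.
by apply: eq_bigr => r _; rewrite subKn // -ltnS.
Qed.


Lemma L1' (K : fieldType) (A : algType K) (t : nat -> idx -> idx -> A) i j k l N :
  yangian_rel t ->
  2%:R *: (Pf t i j k l N.+1 - (-1) ^+ N.+1 *: Pf t k l i j N.+1) =
  (1 - (-1) ^+ N) *: Pf t k j i l N.
Proof.
move=> HY; rewrite Sf_eq L1 // scalerBl scale1r Pf_sign /Pf -sumrB.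
by apply: eq_bigr => r _; rewrite scalerBl.
Qed.

Lemma lin_aux (K : fieldType) (V : lmodType K) (p1 q1 p2 q2 u v : V) (s c e : K) :
  e * e = 1 ->
  2%:R *: (p1 - s *: q1) = c *: u -> 2%:R *: (p2 - s *: q2) = c *: v ->
  2%:R *: ((p1 + e *: p2) - s *: (e *: q2 + q1)) = e *: (c *: (e *: u + v)).
Proof.
move=> ee h1 h2.
have -> : (p1 + e *: p2) - s *: (e *: q2 + q1) = (p1 - s *: q1) + e *: (p2 - s *: q2).
  rewrite scalerDr !scalerBr !scalerA [s * e]mulrC opprD.
  rewrite [- ((e * s) *: q2) - s *: q1]addrC addrACA.
  by [].
rewrite scalerDr h1 [X in c *: u + X]scalerA [X in c *: u + X *: _]mulrC -scalerA h2.
by rewrite !scalerDr !scalerA -mulrA [c * e]mulrC mulrA ee mul1r.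
Qed.


Lemma scoefTT (K : fieldType) (A : algType K) symp (t : nat -> idx -> idx -> A) N :
  scoef symp t N true true = Pf t true true false false N + theta K symp true false *: Pf t true false false true N.
Proof.
rewrite /scoef big_bool /theta /sgn /=.
by case: symp; rewrite /= ?mulr1 ?mul1r ?mulN1r ?opprK ?scale1r.
Qed.

Lemma scoefFF (K : fieldType) (A : algType K) symp (t : nat -> idx -> idx -> A) N :
  scoef symp t N false false = theta K symp true false *: Pf t false true true false N + Pf t false false true true N.
Proof.
rewrite /scoef big_bool /theta /sgn /=.
by case: symp; rewrite /= ?mulr1 ?mul1r ?mulN1r ?opprK ?scale1r.
Qed.

Lemma theta2 (K : fieldType) symp : theta K symp true false * theta K symp true false = 1.
Proof. by rewrite /theta /sgn; case: symp; rewrite ?mul1r ?mulrNN ?mulr1. Qed.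

Lemma Key (K : fieldType) (A : algType K) symp (t : nat -> idx -> idx -> A) N :
  yangian_rel t ->
  2%:R *: (scoef symp t N.+1 true true - (-1) ^+ N.+1 *: scoef symp t N.+1 false false) =
  theta K symp true false *: ((1 - (-1) ^+ N) *: scoef symp t N false false).
Proof.
move=> HY; rewrite scoefTT !scoefFF.
apply: lin_aux; first exact: theta2.
- exact: L1'.
- exact: L1'.
Qed.


Definition Dv (K : fieldType) (A : algType K) symp (t : nat -> idx -> idx -> A) N :=
  scoef symp t N true true - scoef symp t N false false.

Lemma sigma1_D (K : fieldType) (A : algType K) symp (t : nat -> idx -> idx -> A) n :
  (2%:R : K) != 0 ->
  sigma1 symp t n = \sum_(k < n.+1) gg K symp (n - k) *: Dv symp t k.
Proof. by move=> h2; rewrite sigma1E; apply: eq_bigr => k _; rewrite sig_k. Qed.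

Lemma D_even (K : fieldType) (A : algType K) symp (t : nat -> idx -> idx -> A) M :
  (2%:R : K) != 0 -> yangian_rel t -> ~~ odd M ->
  scoef symp t M.+1 false false = - scoef symp t M.+1 true true.
Proof.
move=> h2 HY hM; have := @Key _ _ symp t M HY.
rewrite -(signr_odd _ M) -(signr_odd _ M.+1) /= (negbTE hM) expr1 expr0 subrr scale0r scaler0.
move/eqP; rewrite scaler_eq0 (negbTE h2) /= scaleN1r opprK addrC addr_eq0.
by move/eqP.
Qed.

Lemma D_odd (K : fieldType) (A : algType K) symp (t : nat -> idx -> idx -> A) M :
  (2%:R : K) != 0 -> yangian_rel t -> odd M ->
  Dv symp t M.+1 = theta K symp true false *: scoef symp t M false false.
Proof.
move=> h2 HY hM; have := @Key _ _ symp t M HY.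
rewrite -(signr_odd _ M) -(signr_odd _ M.+1) /= hM expr1 expr0 scale1r opprK.
rewrite scalerA mulrC -scalerA => /(congr1 (fun v => 2%:R^-1 *: v)).
rewrite !scalerA mulVf // !scale1r mulrA (_ : 2^-1 * (1 + 1) = 1) ?mul1r //.
by rewrite -[1 + 1]/(2%:R : K) mulVf.
Qed.

Lemma D_zero (K : fieldType) (A : algType K) symp (t : nat -> idx -> idx -> A) :
  Dv symp t 0 = 0.
Proof.
rewrite /Dv scoefTT scoefFF /Pf !big_ord1 /=.
by rewrite !mulr0 !scaler0 addr0 add0r subrr.
Qed.


Lemma odd_half M : odd M -> M = (M./2).*2.+1.
Proof. by move=> hM; rewrite -[in LHS](odd_double_half M) hM -muln2. Qed.

Lemma even_half M : ~~ odd M -> M.+1 = (M./2).*2.+1.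
Proof. by move=> hM; rewrite -[in LHS](odd_double_half M) (negbTE hM) -muln2. Qed.

Lemma gen_algB (K : fieldType) (A : algType K) (G : A -> Prop) x y :
  gen_alg G x -> gen_alg G y -> gen_alg G (x - y).
Proof. by move=> hx hy; rewrite -scaleN1r; apply: gen_algD => //; apply: gen_algZ. Qed.

Lemma D_in_G2 (K : fieldType) (A : algType K) symp (t : nat -> idx -> idx -> A) (G : A -> Prop) :
  (2%:R : K) != 0 -> yangian_rel t ->
  (forall m, G (scoef symp t m.*2.+1 true true)) ->
  forall k, gen_alg G (Dv symp t k).
Proof.
move=> h2 HY hG [|M]; first by rewrite D_zero; apply: gen_alg0.
case hM: (odd M).
- rewrite D_odd // (odd_half hM) D_even //; last by rewrite odd_double.
  by rewrite scalerN -scaleNr; apply: gen_algZ; apply: gen_alg_in.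
- rewrite /Dv D_even ?hM // opprK.
  apply: gen_algD; apply: gen_alg_in; rewrite (even_half (negbT hM)); exact: hG.
Qed.

Lemma D_in_G1 (K : fieldType) (A : algType K) symp (t : nat -> idx -> idx -> A) (G : A -> Prop) :
  (2%:R : K) != 0 ->
  (forall n, G (sigma1 symp t n)) ->
  forall k, gen_alg G (Dv symp t k).
Proof.
move=> h2 hG; elim/ltn_ind => n IH.
have [_ _ _ g0] := cc_vals symp 0 h2.
have hs := sigma1_D symp t n h2.
rewrite big_ord_recr /= subnn g0 in hs.
have -> : Dv symp t n = (- 2%:R) *: (sigma1 symp t n -
    \sum_(i < n) gg K symp (n - widen_ord (leqnSn n) i) *: Dv symp t (widen_ord (leqnSn n) i)).
  by rewrite hs [X in X - _]addrC addrK scalerA mulrN mulNr opprK mulfV // scale1r.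
apply: gen_algZ; apply: gen_algB; first by apply: gen_alg_in.
by apply: gen_alg_sum => i; apply: gen_algZ; apply: IH => /=.
Qed.

Unset Implicit Arguments.

Theorem proposition3 (R : realType) (symp : bool) (A : algType R[i])
    (t : nat -> idx -> idx -> A) (HY : is_Yangian2 t) :
  forall x : A,
    gen_alg (fun y => center_twY symp t y \/ exists n : nat, y = sigma1 symp t n) x
    <->
    gen_alg (fun y => center_twY symp t y \/ exists m : nat, y = scoef symp t m.*2.+1 true true) x.
Proof.
have h2 : (2%:R : R[i]) != 0 by rewrite pnatr_eq0.
case: HY => HY _ _ x; split; apply: gen_alg_mono => y [hc | [n ->]].
- by apply: gen_alg_in; left.
- rewrite sigma1_D //; apply: gen_alg_sum => k; apply: gen_algZ.
  apply: D_in_G2 => // m; right; by exists m.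
- by apply: gen_alg_in; left.
- have -> : scoef symp t n.*2.+1 true true = 2%:R^-1 *: Dv symp t n.*2.+1.
    rewrite /Dv D_even //; last by rewrite odd_double.
    rewrite opprK scalerDr -scalerDl (_ : 2%:R^-1 + 2%:R^-1 = 1 :> R[i]) ?scale1r //.
    by field.
  apply: gen_algZ; apply: D_in_G1 => // m; right; by exists m.
Qed.
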